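(* $\displaystyle \frac{S_n}{n\log n}\to 1$ in distribution (equivalently, in probability) with respect to $\lambda$, as $n\to\infty$.
   Context: Let $\lambda$ be Lebesgue measure on $[0,1)$, $\tau(x)=2x\bmod 1$ the doubling map, $\chi(x)=\lfloor 1/x\rfloor$ (with $\chi(0)=\infty$), $a_n=\chi\circ\tau^{n-1}$ and $S_n=\sum_{k=1}^n a_k$. *)

(* Defs.v *)
From Stdlib Require Import Reals Lra Lia ZArith.
Open Scope R_scope.

Definition tau (x : R) : R := 2 * x - IZR (Int_part (2 * x)).

Fixpoint tau_iter (k : nat) (x : R) : R :=
  match k with O => x | S k' => tau (tau_iter k' x) end.

(* chi(x) = floor(1/x), with chi(0) = infinity encoded as None *)
Definition chi (x : R) : option nat :=
  if Req_EM_T x 0 then None else Some (Z.to_nat (Int_part (/ x))).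

Definition a (n : nat) (x : R) : option nat := chi (tau_iter (n - 1) x).

Fixpoint Ssum (n : nat) (x : R) : option nat :=
  match n with
  | O => Some O
  | S m => match Ssum m x, a (S m) x with
           | Some s, Some t => Some (s + t)%nat
           | _, _ => None
           end
  end.

(* Lebesgue outer measure bound: lambda*(A) <= d, i.e. A is covered by
   countably many open intervals of total length at most d. *)
Definition outer_measure_le (A : R -> Prop) (d : R) : Prop :=
  exists lo hi : nat -> R,
    (forall i, lo i <= hi i) /\
    (forall x, A x -> exists i, lo i < x < hi i) /\
    (forall N, sum_f_R0 (fun i => hi i - lo i) N <= d).

Definition deviation_event (eps : R) (n : nat) (x : R) : Prop :=
  0 <= x < 1 /\
  match Ssum n x with
  | None => True
  | Some s => Rabs (INR s / (INR n * ln (INR n)) - 1) > eps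
  end.

(* Main.v *)
Require Import Defs.
From Stdlib Require Import Reals Lra Lia Arith ZArith Classical.
Open Scope R_scope.

Fixpoint sumR (N:nat) (f:nat->R) : R :=
  match N with O => 0 | S m => sumR m f + f m end.

Lemma sumR_ext N f g : (forall i, (i<N)%nat -> f i = g i) -> sumR N f = sumR N g.
Proof. induction N; simpl; intros H; auto. rewrite IHN by (intros; apply H; lia). rewrite H by lia; auto. Qed.
Lemma sumR_le N f g : (forall i, (i<N)%nat -> f i <= g i) -> sumR N f <= sumR N g.
Proof. induction N; simpl; intros H; [lra|]. assert (H1:=H N ltac:(lia)). assert (sumR N f <= sumR N g) by (apply IHN; intros; apply H; lia). lra. Qed.
Lemma sumR_plus N f g : sumR N (fun i => f i + g i) = sumR N f + sumR N g.
Proof. induction N; simpl; lra. Qed.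
Lemma sumR_minus N f g : sumR N (fun i => f i - g i) = sumR N f - sumR N g.
Proof. induction N; simpl; lra. Qed.
Lemma sumR_scal N c f : sumR N (fun i => c * f i) = c * sumR N f.
Proof. induction N; simpl; [lra|]. rewrite IHN; lra. Qed.
Lemma sumR_const N c : sumR N (fun _ => c) = INR N * c.
Proof. induction N; simpl sumR; [simpl; lra|]. rewrite IHN, S_INR; lra. Qed.
Lemma sumR_nonneg N f : (forall i, (i<N)%nat -> 0 <= f i) -> 0 <= sumR N f.
Proof. intros H. apply Rle_trans with (sumR N (fun _ => 0)). rewrite sumR_const; lra. apply sumR_le; auto. Qed.
Lemma sumR_add a b f : sumR (a+b) f = sumR a f + sumR b (fun i => f (a+i)%nat).
Proof. induction b; simpl. rewrite Nat.add_0_r; lra. rewrite Nat.add_succ_r; simpl. rewrite IHb; lra. Qed.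
Lemma sumR_mul a b f : sumR (a*b) f = sumR a (fun h => sumR b (fun l => f (h*b+l)%nat)).
Proof. induction a; simpl; auto. rewrite Nat.add_comm, sumR_add, IHa; auto. Qed.
Lemma sumR_swap N K f : sumR N (fun i => sumR K (fun j => f i j)) = sumR K (fun j => sumR N (fun i => f i j)).
Proof. induction N; simpl. rewrite sumR_const; simpl; lra. rewrite IHN, <- sumR_plus; auto. Qed.
Lemma sumR_f_R0 g N : sum_f_R0 g N = sumR (S N) g.
Proof. induction N; simpl; auto. lra. simpl in IHN. rewrite IHN; auto. Qed.
Lemma sumR_mono_len N d f : (forall i, 0 <= f i) -> sumR N f <= sumR (N+d) f.
Proof. intros H. rewrite sumR_add. assert (0 <= sumR d (fun i => f (N+i)%nat)) by (apply sumR_nonneg; auto). lra. Qed.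
Lemma sumR_trunc K B f : (forall i, (B <= i)%nat -> f i = 0) -> (forall i, 0 <= f i) -> sumR K f <= sumR B f.
Proof. intros H0 Hp. induction K; simpl. apply sumR_nonneg; auto.
 destruct (le_lt_dec B K). rewrite H0 by auto; lra.
 replace B with (S K + (B - S K))%nat by lia. apply (sumR_mono_len (S K)); auto. Qed.

Lemma pow2_pos k : (0 < 2^k)%nat.
Proof. apply Nat.neq_0_lt_0, Nat.pow_nonzero; lia. Qed.

Lemma div_sum H Q g : (0 < Q)%nat -> sumR (H*Q) (fun s => g (s / Q)%nat) = INR Q * sumR H g.
Proof. intros HQ. rewrite sumR_mul, <- sumR_scal. apply sumR_ext; intros h _.
 rewrite <- (sumR_const Q (g h)). apply sumR_ext; intros l Hl. f_equal.
 rewrite Nat.div_add_l by lia. rewrite Nat.div_small by lia. lia. Qed.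

Lemma mod_sum K P g : (0 < P)%nat -> sumR (K*P) (fun h => g (h mod P)%nat) = INR K * sumR P g.
Proof. intros HP. rewrite sumR_mul. rewrite <- sumR_const. apply sumR_ext; intros h _.
 apply sumR_ext; intros l Hl. f_equal. rewrite Nat.add_comm, Nat.Div0.mod_add by lia. apply Nat.mod_small; auto. Qed.

Definition win (e W s : nat) : nat := ((s / 2^e) mod 2^W)%nat.
Definition avg (M:nat) (f:nat->R) : R := sumR (2^M) f / 2^M.

Lemma pow2_INR k : INR (2^k) = 2^k.
Proof. rewrite pow_INR. replace (INR 2) with 2 by (simpl; lra). auto. Qed.
Lemma pow2R_pos k : 0 < 2^k.
Proof. apply pow_lt; lra. Qed.

Lemma win_sum e W M g : (e + W <= M)%nat ->
  sumR (2^M) (fun s => g (win e W s)) = INR (2^(M-W)) * sumR (2^W) g.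
Proof. intros H. unfold win.
 replace (2^M)%nat with ((2^(M-e-W) * 2^W) * 2^e)%nat.
 2:{ rewrite <- !Nat.pow_add_r. f_equal. lia. }
 rewrite (div_sum _ _ (fun h => g (h mod 2^W)%nat)) by apply pow2_pos.
 rewrite mod_sum by apply pow2_pos. rewrite <- Rmult_assoc, <- mult_INR.
 f_equal. f_equal. rewrite <- Nat.pow_add_r. f_equal. lia. Qed.

Lemma win_avg e W M g : (e + W <= M)%nat -> avg M (fun s => g (win e W s)) = avg W g.
Proof. intros H. unfold avg. rewrite win_sum by auto. rewrite pow2_INR.
 replace (2^M) with (2^(M-W) * 2^W) by (rewrite <- pow_add; f_equal; lia).
 field. split; apply Rgt_not_eq, pow2R_pos. Qed.

Lemma sumR_scalr N c f : sumR N (fun i => f i * c) = sumR N f * c.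
Proof. induction N; simpl; [lra|]. rewrite IHN; lra. Qed.

Lemma win_hi e1 W H l : (l < 2^e1)%nat -> win e1 W (H*2^e1 + l) = win 0 W H.
Proof. intros Hl. unfold win. f_equal. rewrite Nat.div_add_l by (apply Nat.pow_nonzero; lia).
 rewrite Nat.div_small by auto. rewrite Nat.pow_0_r, Nat.div_1_r. lia. Qed.

Lemma win_lo e1 e2 W H l : (e2 + W <= e1)%nat -> win e2 W (H*2^e1 + l) = win e2 W l.
Proof. intros He. unfold win.
 replace (H*2^e1)%nat with ((H*2^(e1-e2))*2^e2)%nat.
 2:{ rewrite <- Nat.mul_assoc, <- Nat.pow_add_r. f_equal. f_equal. lia. }
 rewrite Nat.div_add_l by (apply Nat.pow_nonzero; lia).
 replace (H*2^(e1-e2))%nat with ((H*2^(e1-e2-W))*2^W)%nat.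
 2:{ rewrite <- Nat.mul_assoc, <- Nat.pow_add_r. f_equal. f_equal. lia. }
 rewrite Nat.add_comm, Nat.Div0.mod_add; auto. Qed.

Lemma pair_avg e1 e2 W M g1 g2 : (e2 + W <= e1)%nat -> (e1 + W <= M)%nat ->
 avg M (fun s => g1 (win e1 W s) * g2 (win e2 W s)) = avg W g1 * avg W g2.
Proof. intros H1 H2. unfold avg.
 replace (2^M)%nat with (2^(M-e1) * 2^e1)%nat by (rewrite <- Nat.pow_add_r; f_equal; lia).
 rewrite sumR_mul.
 rewrite (sumR_ext _ _ (fun h => g1 (win 0 W h) * sumR (2^e1) (fun l => g2 (win e2 W l)))).
 2:{ intros h _. rewrite <- sumR_scal. apply sumR_ext; intros l Hl. rewrite win_hi by auto. rewrite win_lo by auto. auto. }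
 rewrite sumR_scalr. rewrite (win_sum 0 W (M-e1)) by lia. rewrite (win_sum e2 W e1) by lia.
 rewrite ?mult_INR, !pow2_INR.
 replace (2^M) with (2^(M-e1-W) * 2^(e1-W) * 2^W * 2^W) by (rewrite <- !pow_add; f_equal; lia).
 field. repeat split; apply Rgt_not_eq, pow2R_pos. Qed.

Lemma avg_plus M f g : avg M (fun s => f s + g s) = avg M f + avg M g.
Proof. unfold avg. rewrite sumR_plus. field. apply Rgt_not_eq, pow2R_pos. Qed.
Lemma avg_scal M c f : avg M (fun s => c * f s) = c * avg M f.
Proof. unfold avg. rewrite sumR_scal. field. apply Rgt_not_eq, pow2R_pos. Qed.
Lemma avg_const M c : avg M (fun _ => c) = c.
Proof. unfold avg. rewrite sumR_const, pow2_INR. field. apply Rgt_not_eq, pow2R_pos. Qed.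
Lemma avg_le M f g : (forall s, (s < 2^M)%nat -> f s <= g s) -> avg M f <= avg M g.
Proof. intros H. unfold avg. apply Rmult_le_compat_r. left; apply Rinv_0_lt_compat, pow2R_pos. apply sumR_le; auto. Qed.
Lemma avg_sum M n F : avg M (fun s => sumR n (fun j => F j s)) = sumR n (fun j => avg M (F j)).
Proof. unfold avg. rewrite sumR_swap. unfold Rdiv. rewrite <- sumR_scalr. auto. Qed.

Lemma sumR_prod N K f g : sumR N f * sumR K g = sumR N (fun i => sumR K (fun j => f i * g j)).
Proof. rewrite <- sumR_scalr. apply sumR_ext; intros i _. rewrite <- sumR_scal. auto. Qed.

Definition indI (a d k : nat) : R := if andb (a <=? k)%nat (k <? a + d)%nat then 1 else 0.

Lemma indI_sum n a d : sumR n (indI a d) = INR (Nat.min n (a+d) - Nat.min n a).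
Proof. induction n; simpl sumR. simpl; auto. rewrite IHn. unfold indI.
 destruct (Nat.leb_spec a n); destruct (Nat.ltb_spec n (a+d)); cbn [andb].
 - replace (Nat.min (S n) (a+d) - Nat.min (S n) a)%nat with (S (Nat.min n (a+d) - Nat.min n a)%nat) by lia. rewrite S_INR; lra.
 - replace (Nat.min (S n) (a+d) - Nat.min (S n) a)%nat with ((Nat.min n (a+d) - Nat.min n a)%nat) by lia. lra.
 - replace (Nat.min (S n) (a+d) - Nat.min (S n) a)%nat with ((Nat.min n (a+d) - Nat.min n a)%nat) by lia. lra.
 - replace (Nat.min (S n) (a+d) - Nat.min (S n) a)%nat with ((Nat.min n (a+d) - Nat.min n a)%nat) by lia. lra.
Qed.

Lemma indI_sum_le n a d : sumR n (indI a d) <= INR d.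
Proof. rewrite indI_sum. apply le_INR. lia. Qed.

Lemma indI_nonneg a d k : 0 <= indI a d k.
Proof. unfold indI. destruct (andb _ _); lra. Qed.

Lemma avg_ext M f g : (forall s, f s = g s) -> avg M f = avg M g.
Proof. intros H. unfold avg. f_equal. apply sumR_ext; auto. Qed.

Definition Xs (n W : nat) (phi : nat -> R) (s : nat) : R :=
  sumR n (fun j => phi (win (n-1-j) W s)).

Lemma Xs_avg n W M phi : (n - 1 + W <= M)%nat -> avg M (Xs n W phi) = INR n * avg W phi.
Proof. intros H. unfold Xs. rewrite avg_sum. rewrite (sumR_ext _ _ (fun _ => avg W phi)).
 apply sumR_const. intros j Hj. apply win_avg. lia. Qed.

Lemma avg_nonneg M f : (forall s, 0 <= f s) -> 0 <= avg M f.
Proof. intros H. unfold avg. apply Rmult_le_pos. apply sumR_nonneg; intros; apply H.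
   left; apply Rinv_0_lt_compat, pow2R_pos. Qed.

Lemma var_bound n W M phi c : (n - 1 + W <= M)%nat -> (forall w, 0 <= phi w <= c) ->
  avg M (fun s => (Xs n W phi s - INR n * avg W phi)^2) <= INR n * (2 * INR W) * c * avg W phi.
Proof. intros HM Hp. set (mu := avg W phi).
 assert (Hmu : 0 <= mu) by (apply avg_nonneg; intros; apply Hp).
 assert (Hc : 0 <= c) by (destruct (Hp 0%nat); lra).
 rewrite (avg_ext _ _ (fun s => sumR n (fun j => sumR n (fun k => phi (win (n-1-j) W s) * phi (win (n-1-k) W s)))
    + (-2 * INR n * mu) * Xs n W phi s + (INR n * mu)^2)).
 2:{ intros s. rewrite <- sumR_prod. fold (Xs n W phi s). ring. }
 rewrite !avg_plus, avg_scal, avg_const, Xs_avg by auto. fold mu.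
 rewrite avg_sum. rewrite (sumR_ext _ _ (fun j => sumR n (fun k => avg M (fun s => phi (win (n-1-j) W s) * phi (win (n-1-k) W s))))).
 2:{ intros j _. apply avg_sum. }
 assert (Hb : sumR n (fun j => sumR n (fun k => avg M (fun s => phi (win (n-1-j) W s) * phi (win (n-1-k) W s))))
   <= sumR n (fun j => sumR n (fun k => mu^2 + c * mu * indI (j+1-W) (2*W) k))).
 { apply sumR_le; intros j Hj. apply sumR_le; intros k Hk.
   assert (0 <= c * mu * indI (j+1-W) (2*W) k) by (apply Rmult_le_pos; [apply Rmult_le_pos; auto| apply indI_nonneg]).
   destruct (le_lt_dec (j+W) k).
   - rewrite pair_avg by lia. fold mu. lra.
   - destruct (le_lt_dec (k+W) j).
     + rewrite (avg_ext _ _ (fun s => phi (win (n-1-k) W s) * phi (win (n-1-j) W s))) by (intros; ring).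
       rewrite pair_avg by lia. fold mu. lra.
     + assert (Hi : indI (j+1-W) (2*W) k = 1).
       { unfold indI. destruct (Nat.leb_spec (j+1-W) k); [|lia]. destruct (Nat.ltb_spec k (j+1-W+2*W)); [|lia]. auto. }
       rewrite Hi. apply Rle_trans with (avg M (fun s => c * phi (win (n-1-k) W s))).
       * apply avg_le; intros s _. apply Rmult_le_compat_r. apply Hp. apply Hp.
       * rewrite avg_scal, win_avg by lia. fold mu. nra. }
 assert (Hb2 : sumR n (fun j => sumR n (fun k => mu^2 + c * mu * indI (j+1-W) (2*W) k))
    <= sumR n (fun j => INR n * mu^2 + c * mu * (2 * INR W))).
 { apply sumR_le; intros j Hj. rewrite sumR_plus, sumR_const, sumR_scal.
   assert (H2 := indI_sum_le n (j+1-W) (2*W)). rewrite mult_INR in H2. simpl (INR 2) in H2.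
   assert (0 <= c * mu) by (apply Rmult_le_pos; auto). nra. }
 rewrite sumR_const in Hb2. nra.
Qed.

Lemma ln_le_sub1 z : 0 < z -> ln z <= z - 1.
Proof. intros Hz. assert (H := exp_ineq1_le (ln z)). rewrite exp_ln in H; lra. Qed.

Lemma ln_step y : 0 < y -> / (y + 1) <= ln (y+1) - ln y <= / y.
Proof. intros Hy. split.
 - assert (H := ln_le_sub1 (y / (y+1)) ltac:(apply Rdiv_lt_0_compat; lra)).
   unfold Rdiv in H. rewrite ln_mult, ln_Rinv in H by (try apply Rinv_0_lt_compat; lra).
   assert (y * / (y+1) - 1 = - / (y+1)) by (field; lra). lra.
 - assert (H := ln_le_sub1 ((y+1) / y) ltac:(apply Rdiv_lt_0_compat; lra)).
   unfold Rdiv in H. rewrite ln_mult, ln_Rinv in H by (try apply Rinv_0_lt_compat; lra).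
   assert ((y+1) * / y - 1 = / y) by (field; lra). lra. Qed.

Lemma HU a K : 0 < a -> sumR K (fun i => / (a + 1 + INR i)) <= ln (a + INR K) - ln a.
Proof. intros Ha. induction K; simpl sumR. simpl; rewrite Rplus_0_r; lra.
 rewrite S_INR. assert (H := ln_step (a + INR K) ltac:(pose proof (pos_INR K); lra)).
 replace (a + 1 + INR K) with (a + INR K + 1) by ring. replace (a + (INR K + 1)) with (a + INR K + 1) by ring. lra. Qed.

Lemma HL a K : 0 < a -> ln (a + INR K) - ln a <= sumR K (fun i => / (a + INR i)).
Proof. intros Ha. induction K; simpl sumR. simpl; rewrite Rplus_0_r; lra.
 rewrite S_INR. assert (H := ln_step (a + INR K) ltac:(pose proof (pos_INR K); lra)).
 replace (a + (INR K + 1)) with (a + INR K + 1) by ring. lra. Qed.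

Lemma sumR_1 f : sumR 1 f = f 0%nat.
Proof. simpl; ring. Qed.

Lemma HU' a K : 0 < a -> sumR K (fun i => / (a + INR i)) <= / a + ln (a + INR K) - ln a.
Proof. intros Ha. destruct K. simpl. rewrite Rplus_0_r. assert (0 < / a) by (apply Rinv_0_lt_compat; lra). lra.
 replace (S K) with (1 + K)%nat by lia. rewrite sumR_add. rewrite sumR_1.
 rewrite (sumR_ext _ _ (fun i => / (a + 1 + INR i))).
 2:{ intros i _. rewrite (plus_INR 1 i). simpl (INR 1). f_equal. ring. }
 assert (H := HU a K Ha). rewrite plus_INR. simpl (INR 1).
 assert (ln (a + INR K) <= ln (a + (1 + INR K))).
 { destruct (pos_INR K); [left; apply ln_increasing; lra| ]. rewrite <- H0. apply Rlt_le, ln_increasing; lra. }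
 simpl (INR 0). rewrite Rplus_0_r. lra. Qed.

Definition phi_hi W m w := if (w =? 0)%nat then 0 else if (m <=? w)%nat then 2^W / INR w else 2^W / INR m.
Definition phi_lo W m w := if andb (m <=? w+1)%nat (w <? 2^W)%nat then 2^W / INR (w+1) - 1 else 0.
Definition phi2 W A m w := if andb (A <=? w)%nat (w <? m)%nat then 2^W / INR w else 0.
Definition zer (w:nat) : R := if (w =? 0)%nat then 1 else 0.
Definition big A w : R := if andb (1 <=? w)%nat (w <? A)%nat then 1 else 0.

Lemma INRpos k : (1 <= k)%nat -> 0 < INR k.
Proof. intros; apply lt_0_INR; lia. Qed.

Lemma split_at (N a : nat) f : (a <= N)%nat -> sumR N f = sumR a f + sumR (N - a) (fun i => f (a + i)%nat).
Proof. intros H. rewrite <- sumR_add. f_equal. lia. Qed.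

Lemma mean_zero W : avg W zer = / 2^W.
Proof. unfold avg. rewrite (split_at _ 1) by (apply pow2_pos). rewrite sumR_1.
 rewrite (sumR_ext _ _ (fun _ => 0)). rewrite sumR_const. unfold zer; simpl. field. apply Rgt_not_eq, pow2R_pos.
 intros i _. unfold zer. destruct (Nat.eqb_spec (1+i) 0); [lia|auto]. Qed.

Lemma mean_big W A : (A <= 2^W)%nat -> avg W (big A) <= INR A / 2^W.
Proof. intros H. unfold avg. apply Rmult_le_compat_r. left; apply Rinv_0_lt_compat, pow2R_pos.
 rewrite (split_at _ A) by auto. rewrite (sumR_ext (2^W - A) _ (fun _ => 0)). rewrite sumR_const.
 rewrite Rmult_0_r, Rplus_0_r. rewrite <- (Rmult_1_r (INR A)), <- sumR_const. apply sumR_le.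
 intros i _. unfold big. destruct (andb _ _); lra.
 intros i _. unfold big. destruct (Nat.ltb_spec (A+i) A); [lia|]. rewrite Bool.andb_false_r; auto. Qed.

Lemma mean_phi2 W A m : (1 <= A)%nat -> (A <= m)%nat -> (m <= 2^W)%nat ->
  avg W (phi2 W A m) <= 1 + ln (INR m) - ln (INR A).
Proof. intros H1 H2 H3. unfold avg.
 rewrite (split_at _ A) by lia. rewrite (split_at (2^W - A) (m - A)) by lia.
 rewrite (sumR_ext A _ (fun _ => 0)).
 2:{ intros i Hi. unfold phi2. destruct (Nat.leb_spec A i); [lia|auto]. }
 rewrite (sumR_ext (2^W - A - (m - A)) _ (fun _ => 0)).
 2:{ intros i Hi. unfold phi2. destruct (Nat.ltb_spec (A + (m - A + i)) m); [lia|]. rewrite Bool.andb_false_r; auto. }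
 rewrite (sumR_ext (m - A) _ (fun i => 2^W * / (INR A + INR i))).
 2:{ intros i Hi. unfold phi2. destruct (Nat.leb_spec A (A+i)); [|lia]. destruct (Nat.ltb_spec (A+i) m); [|lia].
     simpl. rewrite plus_INR. auto. }
 rewrite !sumR_const, sumR_scal. assert (HA := INRpos A H1).
 assert (Hh := HU' (INR A) (m - A) HA). rewrite minus_INR in Hh by lia.
 replace (INR A + (INR m - INR A)) with (INR m) in Hh by ring.
 assert (/ INR A <= 1). { rewrite <- Rinv_1. apply Rinv_le_contravar; try lra. apply (le_INR 1); auto. }
 assert (HP := pow2R_pos W).
 apply Rmult_le_reg_r with (2^W); auto. unfold Rdiv. rewrite Rmult_assoc, Rinv_l by lra. nra. Qed.

Lemma mean_hi W m : (1 <= m)%nat -> (m <= 2^W)%nat ->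
  avg W (phi_hi W m) <= 2 + ln (2^W) - ln (INR m).
Proof. intros H1 H3. unfold avg. assert (HP := pow2R_pos W). assert (Hm := INRpos m H1).
 rewrite (split_at _ m) by lia.
 assert (Ha : sumR m (phi_hi W m) <= 2^W).
 { apply Rle_trans with (sumR m (fun _ => 2^W / INR m)).
   - apply sumR_le. intros i Hi. unfold phi_hi. destruct (Nat.eqb_spec i 0). apply Rlt_le, Rdiv_lt_0_compat; lra.
     destruct (Nat.leb_spec m i); [lia|lra].
   - rewrite sumR_const. right; field; lra. }
 rewrite (sumR_ext (2^W - m) _ (fun i => 2^W * / (INR m + INR i))).
 2:{ intros i Hi. unfold phi_hi. destruct (Nat.eqb_spec (m+i) 0); [lia|]. destruct (Nat.leb_spec m (m+i)); [|lia].
     rewrite plus_INR; auto. }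
 rewrite sumR_scal. assert (Hh := HU' (INR m) (2^W - m) Hm). rewrite minus_INR, pow2_INR in Hh by lia.
 replace (INR m + (2^W - INR m)) with (2^W) in Hh by ring.
 assert (/ INR m <= 1). { rewrite <- Rinv_1. apply Rinv_le_contravar; try lra. apply (le_INR 1); auto. }
 apply Rmult_le_reg_r with (2^W); auto. unfold Rdiv. rewrite Rmult_assoc, Rinv_l by lra. nra. Qed.

Lemma mean_lo W m : (1 <= m)%nat -> (m <= 2^W)%nat ->
  ln (2^W) - ln (INR m) - 1 <= avg W (phi_lo W m).
Proof. intros H1 H3. unfold avg. assert (HP := pow2R_pos W). assert (Hm := INRpos m H1).
 rewrite (split_at _ (m-1)) by lia.
 assert (Ha : 0 <= sumR (m-1) (phi_lo W m)).
 { apply sumR_nonneg. intros i Hi. unfold phi_lo. destruct (Nat.leb_spec m (i+1)); [lia|]. simpl; lra. }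
 rewrite (sumR_ext (2^W - (m-1)) _ (fun i => 2^W * / (INR m + INR i) - 1)).
 2:{ intros i Hi. unfold phi_lo. destruct (Nat.leb_spec m (m-1+i+1)); [|lia]. destruct (Nat.ltb_spec (m-1+i) (2^W)); [|lia].
     simpl. replace (m-1+i+1)%nat with (m+i)%nat by lia. rewrite plus_INR; auto. }
 rewrite sumR_minus, sumR_scal, sumR_const. assert (Hh := HL (INR m) (2^W - (m-1)) Hm).
 rewrite minus_INR in Hh by lia. rewrite minus_INR by lia. rewrite pow2_INR in *. simpl (INR 1) in *.
 assert (ln (2^W) <= ln (INR m + (2 ^ W - (INR m - 1)))).
 { apply Rlt_le, ln_increasing; lra. }
 apply Rmult_le_reg_r with (2^W); auto. unfold Rdiv. rewrite Rmult_assoc, Rinv_l by lra.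
 assert (INR m - 1 >= 0). { assert (1 <= INR m) by (apply (le_INR 1); auto). lra. }
 rewrite (minus_INR m 1) in * by lia. simpl (INR 1) in *. nra. Qed.

Lemma div_le_mono P x y : 0 <= P -> 0 < x -> x <= y -> P / y <= P / x.
Proof. intros. unfold Rdiv. apply Rmult_le_compat_l; auto. apply Rinv_le_contravar; auto. Qed.

Lemma phi_hi_bnd W m w : (1 <= m)%nat -> 0 <= phi_hi W m w <= 2^W / INR m.
Proof. intros H1. assert (HP := pow2R_pos W). assert (Hm := INRpos m H1). unfold phi_hi.
 assert (0 < 2^W / INR m) by (apply Rdiv_lt_0_compat; lra).
 destruct (Nat.eqb_spec w 0). lra. destruct (Nat.leb_spec m w). split.
 apply Rlt_le, Rdiv_lt_0_compat; auto. apply INRpos; lia.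
 apply div_le_mono; try lra. apply le_INR; auto. lra. Qed.

Lemma phi_lo_bnd W m w : (1 <= m)%nat -> 0 <= phi_lo W m w <= 2^W / INR m.
Proof. intros H1. assert (HP := pow2R_pos W). assert (Hm := INRpos m H1). unfold phi_lo.
 assert (0 < 2^W / INR m) by (apply Rdiv_lt_0_compat; lra).
 destruct (Nat.leb_spec m (w+1)); destruct (Nat.ltb_spec w (2^W)); simpl; try lra.
 split.
 - assert (1 <= 2^W / INR (w+1)). { apply Rmult_le_reg_r with (INR (w+1)). apply INRpos; lia.
     unfold Rdiv. rewrite Rmult_assoc, Rinv_l. rewrite <- pow2_INR. rewrite Rmult_1_l, Rmult_1_r. apply le_INR; lia.
     apply Rgt_not_eq, INRpos; lia. } lra.
 - assert (2^W / INR (w+1) <= 2^W / INR m) by (apply div_le_mono; try lra; apply le_INR; auto). lra. Qed.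

Lemma lo_le_hi W m w : (2 <= m)%nat -> phi_lo W m w <= phi_hi W m w.
Proof. intros H1. assert (HP := pow2R_pos W). destruct (phi_hi_bnd W m w ltac:(lia)) as [Hh _].
 unfold phi_lo. destruct (Nat.leb_spec m (w+1)); destruct (Nat.ltb_spec w (2^W)); simpl; try lra.
 unfold phi_hi. destruct (Nat.eqb_spec w 0); [lia|]. destruct (Nat.leb_spec m w).
 - assert (2^W / INR (w+1) <= 2^W / INR w) by (apply div_le_mono; try lra; [apply INRpos; lia| apply le_INR; lia]). lra.
 - replace (w+1)%nat with m by lia. lra. Qed.

Lemma zer_nonneg w : 0 <= zer w.
Proof. unfold zer. destruct (_ =? _)%nat; lra. Qed.
Lemma big_nonneg A w : 0 <= big A w.
Proof. unfold big. destruct (andb _ _); lra. Qed.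
Lemma phi2_nonneg W A m w : 0 <= phi2 W A m w.
Proof. unfold phi2. destruct (Nat.leb_spec A w); destruct (Nat.ltb_spec w m); simpl; try lra.
 destruct (Nat.eq_dec w 0). subst. unfold Rdiv. simpl (INR 0). rewrite Rinv_0. lra.
 apply Rlt_le, Rdiv_lt_0_compat. apply pow2R_pos. apply INRpos; lia. Qed.

Lemma IP_char r z : IZR z <= r < IZR z + 1 -> Int_part r = z.
Proof. intros H. symmetry. apply Int_part_spec. lra. Qed.

Lemma tau_iter_eq j x : 0 <= x < 1 -> tau_iter j x = 2^j * x - IZR (Int_part (2^j * x)).
Proof. intros Hx. induction j; simpl tau_iter.
 - replace (2^0 * x) with x by (simpl; ring). rewrite (IP_char x 0%Z); simpl; lra.
 - rewrite IHj. unfold tau. set (z := Int_part (2^j * x)).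
   set (z' := Int_part (2^(S j) * x)).
   assert (H1 := base_Int_part (2^(S j) * x)). fold z' in H1.
   assert (Hz : Int_part (2 * (2 ^ j * x - IZR z)) = (z' - 2 * z)%Z).
   { apply IP_char. rewrite minus_IZR, mult_IZR. simpl pow in H1. simpl (IZR 2). lra. }
   rewrite Hz, minus_IZR, mult_IZR. simpl pow. simpl (IZR 2). lra. Qed.

Lemma IZR_nat z : (0 <= z)%Z -> INR (Z.to_nat z) = IZR z.
Proof. intros H. rewrite INR_IZR_INZ, Z2Nat.id; auto. Qed.

Lemma floor_nat r : 0 <= r -> INR (Z.to_nat (Int_part r)) <= r < INR (Z.to_nat (Int_part r)) + 1
   /\ (0 <= Int_part r)%Z.
Proof. intros H. assert (B := base_Int_part r).
 assert (Hz : (0 <= Int_part r)%Z). { assert (-1 < Int_part r)%Z by (apply lt_IZR; simpl; lra). lia. }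
 rewrite IZR_nat by auto. repeat split; try lra; auto. Qed.

Definition dig (M : nat) (x : R) : nat := Z.to_nat (Int_part (2^M * x)).

Lemma dig_spec M x : 0 <= x < 1 -> INR (dig M x) <= 2^M * x < INR (dig M x) + 1 /\ (dig M x < 2^M)%nat.
Proof. intros Hx. assert (HP := pow2R_pos M). destruct (floor_nat (2^M * x)) as [[H1 H2] H3]. nra.
 unfold dig. repeat split; auto. apply INR_lt. rewrite pow2_INR. nra. Qed.

Lemma div_spec M e x s : (e <= M)%nat -> INR s <= 2^M * x < INR s + 1 ->
  INR (s / 2^e) <= 2^(M-e) * x < INR (s / 2^e) + 1.
Proof. intros He [H1 H2]. set (u := (s / 2^e)%nat).
 assert (Hne : (2^e <> 0)%nat) by (apply Nat.pow_nonzero; lia).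
 assert (Ha : (2^e * u <= s)%nat) by (apply Nat.Div0.mul_div_le).
 assert (Hb : (s < 2^e * S u)%nat) by (apply Nat.mul_succ_div_gt; auto).
 apply le_INR in Ha. rewrite mult_INR, pow2_INR in Ha.
 assert (HM : 2^M = 2^(M-e) * 2^e) by (rewrite <- pow_add; f_equal; lia).
 rewrite HM in H1, H2. assert (HP := pow2R_pos e).
 assert (INR s + 1 <= 2^e * (INR u + 1)).
 { assert (Hb' : (s + 1 <= 2^e * S u)%nat) by lia. apply le_INR in Hb'. rewrite plus_INR, mult_INR, pow2_INR, !S_INR in Hb'. simpl (INR 0) in Hb'. lra. }
 split; nra. Qed.

Lemma window_spec n W x j : 0 <= x < 1 -> (j < n)%nat ->
  INR (win (n-1-j) W (dig (n-1+W) x)) <= 2^W * tau_iter j x < INR (win (n-1-j) W (dig (n-1+W) x)) + 1.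
Proof. intros Hx Hj. set (M := (n-1+W)%nat). set (s := dig M x). set (e := (n-1-j)%nat).
 destruct (dig_spec M x Hx) as [Hs _]. fold s in Hs.
 assert (Hu := div_spec M e x s ltac:(unfold M, e; lia) Hs).
 assert (Hv := div_spec M (e+W) x s ltac:(unfold M, e; lia) Hs).
 replace (M - e)%nat with (j + W)%nat in Hu by (unfold M, e; lia).
 replace (M - (e+W))%nat with j in Hv by (unfold M, e; lia).
 set (u := (s / 2^e)%nat) in *. set (v := (s / 2^(e+W))%nat) in *.
 assert (Hvu : v = (u / 2^W)%nat). { unfold v, u. rewrite Nat.Div0.div_div, Nat.pow_add_r. auto. }
 assert (Hdm : u = (2^W * v + win e W s)%nat). { unfold win. fold u. rewrite Hvu. apply Nat.div_mod_eq. }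
 rewrite tau_iter_eq by auto.
 rewrite (IP_char (2^j * x) (Z.of_nat v)) by (rewrite <- INR_IZR_INZ; lra).
 rewrite <- INR_IZR_INZ. apply (f_equal INR) in Hdm. rewrite plus_INR, mult_INR, pow2_INR in Hdm.
 rewrite pow_add in Hu. nra. Qed.

Lemma chi_bound W y w : (1 <= w)%nat -> INR w <= 2^W * y < INR w + 1 ->
  exists A, chi y = Some A /\ 2^W / INR (w+1) - 1 <= INR A <= 2^W / INR w.
Proof. intros Hw Hy. assert (HP := pow2R_pos W). assert (Hwp := INRpos w Hw).
 assert (Hy0 : 0 < y) by nra.
 unfold chi. destruct (Req_EM_T y 0). lra.
 exists (Z.to_nat (Int_part (/ y))). split; auto.
 destruct (floor_nat (/ y)) as [[H1 H2] _]. left; apply Rinv_0_lt_compat; auto.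
 assert (E1 : / y <= 2^W / INR w).
 { replace (2^W / INR w) with (/ (INR w / 2^W)) by (field; lra). apply Rinv_le_contravar.
   apply Rdiv_lt_0_compat; lra. apply Rmult_le_reg_l with (2^W); auto. field_simplify; lra. }
 assert (E2 : 2^W / INR (w+1) < / y).
 { rewrite plus_INR. change (INR 1) with 1.
   replace (2^W / (INR w + 1)) with (/ ((INR w + 1) / 2^W)) by (field; lra). apply Rinv_lt_contravar.
   apply Rmult_lt_0_compat; auto. apply Rdiv_lt_0_compat; lra. apply Rmult_lt_reg_l with (2^W); auto. field_simplify; lra. }
 lra. Qed.

Lemma Ssum_bounds x n lo hi : (forall j, (j < n)%nat -> exists A, a (S j) x = Some A /\ lo j <= INR A <= hi j) ->
  exists S, Ssum n x = Some S /\ sumR n lo <= INR S <= sumR n hi.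
Proof. induction n; intros H.
 - exists 0%nat. simpl. split; auto; lra.
 - destruct IHn as [S0 [HS0 HB]]. intros j Hj; apply H; lia.
   destruct (H n ltac:(lia)) as [A0 [HA HAb]].
   exists (S0 + A0)%nat. simpl Ssum. rewrite HS0, HA. split; auto. simpl sumR. rewrite plus_INR. lra. Qed.

Lemma sumR_ge_term n f j : (forall i, (i < n)%nat -> 0 <= f i) -> (j < n)%nat -> f j <= sumR n f.
Proof. intros H Hj. rewrite (split_at n j) by lia. replace (n - j)%nat with (1 + (n - j - 1))%nat by lia.
 rewrite sumR_add, sumR_1, Nat.add_0_r.
 assert (0 <= sumR j f) by (apply sumR_nonneg; intros; apply H; lia).
 assert (0 <= sumR (n - j - 1) (fun i => f (j + (1 + i))%nat)) by (apply sumR_nonneg; intros; apply H; lia).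
 lra. Qed.

Lemma sq_div_ge d t : 0 < t -> t <= Rabs d -> 1 <= d^2 / t^2.
Proof. intros Ht Hd. assert (t^2 <= d^2). { rewrite <- (pow2_abs d). apply pow_incr; lra. }
 apply Rmult_le_reg_r with (t^2). apply pow_lt; auto. unfold Rdiv. rewrite Rmult_assoc, Rinv_l. lra.
 apply Rgt_not_eq, pow_lt; auto. Qed.

Lemma sq_div_nonneg d t : 0 < t -> 0 <= d^2 / t^2.
Proof. intros Ht. apply Rmult_le_pos. apply pow2_ge_0. left; apply Rinv_0_lt_compat, pow_lt; auto. Qed.

Lemma Xs_nonneg n W phi s : (forall w, 0 <= phi w) -> 0 <= Xs n W phi s.
Proof. intros H. apply sumR_nonneg; auto. Qed.

Definition Fbad (n W m Ab : nat) (eps : R) (s : nat) : R :=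
  let b := INR n * ln (INR n) in let t := eps * b / 2 in
  Xs n W zer s + Xs n W (big Ab) s + (2 / (eps * b)) * Xs n W (phi2 W Ab m) s
  + (Xs n W (phi_hi W m) s - INR n * avg W (phi_hi W m))^2 / t^2
  + (Xs n W (phi_lo W m) s - INR n * avg W (phi_lo W m))^2 / t^2.

Lemma win_lt e W s : (win e W s < 2^W)%nat.
Proof. unfold win. apply Nat.mod_upper_bound, Nat.pow_nonzero; lia. Qed.

Lemma Fbad_nonneg n W m Ab eps s : 0 < eps -> 0 < INR n * ln (INR n) -> 0 <= Fbad n W m Ab eps s.
Proof. intros He Hb. unfold Fbad.
 assert (0 <= Xs n W zer s) by (apply Xs_nonneg, zer_nonneg).
 assert (0 <= Xs n W (big Ab) s) by (apply Xs_nonneg, big_nonneg).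
 assert (0 <= 2 / (eps * (INR n * ln (INR n))) * Xs n W (phi2 W Ab m) s).
 { apply Rmult_le_pos. apply Rlt_le, Rdiv_lt_0_compat; [lra| apply Rmult_lt_0_compat; auto]. apply Xs_nonneg, phi2_nonneg. }
 assert (0 < eps * (INR n * ln (INR n)) / 2) by (apply Rdiv_lt_0_compat; [apply Rmult_lt_0_compat|]; lra).
 assert (Q1 := sq_div_nonneg (Xs n W (phi_hi W m) s - INR n * avg W (phi_hi W m)) _ H2).
 assert (Q3 := sq_div_nonneg (Xs n W (phi_lo W m) s - INR n * avg W (phi_lo W m)) _ H2).
 lra. Qed.

Lemma pointwise n W m Ab eps x : 0 < eps -> 0 < INR n * ln (INR n) ->
  (1 <= Ab)%nat -> (Ab <= m)%nat -> (2 <= m)%nat ->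
  INR n * avg W (phi_hi W m) <= INR n * ln (INR n) ->
  (1 - eps/2) * (INR n * ln (INR n)) <= INR n * avg W (phi_lo W m) ->
  deviation_event eps n x -> 1 <= Fbad n W m Ab eps (dig (n-1+W) x).
Proof. intros He Hb HA1 HA2 Hm Hmh Hml [Hx Hdev].
 set (b := INR n * ln (INR n)) in *. set (s := dig (n-1+W) x).
 assert (Hz : 0 <= Xs n W zer s) by (apply Xs_nonneg, zer_nonneg).
 assert (Hbg : 0 <= Xs n W (big Ab) s) by (apply Xs_nonneg, big_nonneg).
 assert (Ht : 0 < eps * b / 2) by (apply Rdiv_lt_0_compat; [apply Rmult_lt_0_compat|]; lra).
 assert (Hp2 : 0 <= 2 / (eps * b) * Xs n W (phi2 W Ab m) s).
 { apply Rmult_le_pos. apply Rlt_le, Rdiv_lt_0_compat; [lra| apply Rmult_lt_0_compat; auto]. apply Xs_nonneg, phi2_nonneg. }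
 assert (Q1 := sq_div_nonneg (Xs n W (phi_hi W m) s - INR n * avg W (phi_hi W m)) _ Ht).
 assert (Q3 := sq_div_nonneg (Xs n W (phi_lo W m) s - INR n * avg W (phi_lo W m)) _ Ht).
 unfold Fbad. fold b.
 destruct (classic (exists j, (j < n)%nat /\ (win (n-1-j) W s < Ab)%nat)) as [[j [Hj Hw]]|Hno].
 - destruct (Nat.eq_dec (win (n-1-j) W s) 0) as [E|E].
   + assert (1 <= Xs n W zer s).
     { unfold Xs. apply Rle_trans with (zer (win (n-1-j) W s)). rewrite E; unfold zer; simpl; lra.
       apply (sumR_ge_term n (fun j => zer (win (n-1-j) W s))); auto. intros; apply zer_nonneg. }
     lra.
   + assert (1 <= Xs n W (big Ab) s).
     { unfold Xs. apply Rle_trans with (big Ab (win (n-1-j) W s)).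
       unfold big. destruct (Nat.leb_spec 1 (win (n-1-j) W s)); [|lia]. destruct (Nat.ltb_spec (win (n-1-j) W s) Ab); [|lia]. simpl; lra.
       apply (sumR_ge_term n (fun j => big Ab (win (n-1-j) W s))); auto. intros; apply big_nonneg. }
     lra.
 - assert (Hall : forall j, (j < n)%nat -> (Ab <= win (n-1-j) W s)%nat).
   { intros j Hj. destruct (le_lt_dec Ab (win (n-1-j) W s)); auto. exfalso; apply Hno; eauto. }
   destruct (Ssum_bounds x n (fun j => phi_lo W m (win (n-1-j) W s))
       (fun j => phi_hi W m (win (n-1-j) W s) + phi2 W Ab m (win (n-1-j) W s))) as [S [HS [HS1 HS2]]].
   { intros j Hj. set (w := win (n-1-j) W s). assert (Hw1 := Hall j Hj). fold w in Hw1.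
     assert (Hwl : (w < 2^W)%nat) by apply win_lt.
     destruct (chi_bound W (tau_iter j x) w ltac:(lia) (window_spec n W x j Hx Hj)) as [A0 [HA0 HB0]].
     exists A0. replace (S j - 1)%nat with j by lia. unfold a. replace (S j - 1)%nat with j by lia. split; auto.
     assert (HP := pow2R_pos W). split.
     - apply Rle_trans with (2^W / INR (w+1) - 1); [|lra].
       unfold phi_lo. destruct (Nat.leb_spec m (w+1)); destruct (Nat.ltb_spec w (2^W)); simpl; try lra; try lia.
       assert (1 <= 2^W / INR (w+1)). { apply Rmult_le_reg_r with (INR (w+1)). apply INRpos; lia.
         unfold Rdiv. rewrite Rmult_assoc, Rinv_l. rewrite <- pow2_INR. rewrite Rmult_1_l, Rmult_1_r. apply le_INR; lia.
         apply Rgt_not_eq, INRpos; lia. } lra.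
     - apply Rle_trans with (2^W / INR w); [lra|].
       assert (0 <= phi_hi W m w) by (apply phi_hi_bnd; lia). assert (0 <= phi2 W Ab m w) by apply phi2_nonneg.
       unfold phi_hi, phi2. destruct (Nat.eqb_spec w 0); [lia|]. destruct (Nat.leb_spec m w).
       + unfold phi2 in *. destruct (Nat.ltb_spec w m); [lia|]. rewrite Bool.andb_false_r in *. lra.
       + unfold phi_hi in *. destruct (Nat.leb_spec Ab w); [|lia]. destruct (Nat.ltb_spec w m); [|lia]. simpl.
         assert (0 <= 2^W / INR m) by (apply Rlt_le, Rdiv_lt_0_compat; [lra| apply INRpos; lia]). lra. }
   rewrite sumR_plus in HS2. fold (Xs n W (phi_lo W m) s) in HS1.
   fold (Xs n W (phi_hi W m) s) in HS2. fold (Xs n W (phi2 W Ab m) s) in HS2.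
   rewrite HS in Hdev. unfold Rabs in Hdev. destruct (Rcase_abs (INR S / b - 1)) as [Hneg|Hpos].
   + assert (INR S < (1 - eps) * b).
     { assert (INR S / b < 1 - eps) by lra. apply (Rmult_lt_compat_r b) in H; auto. unfold Rdiv in H.
       rewrite Rmult_assoc, Rinv_l in H by lra. lra. }
     assert (1 <= (Xs n W (phi_lo W m) s - INR n * avg W (phi_lo W m)) ^ 2 / (eps * b / 2) ^ 2).
     { apply sq_div_ge; auto. rewrite Rabs_left1 by lra. lra. }
     lra.
   + assert (INR S > (1 + eps) * b).
     { assert (INR S / b > 1 + eps) by lra. apply (Rmult_lt_compat_r b) in H; auto. unfold Rdiv in H.
       rewrite Rmult_assoc, Rinv_l in H by lra. lra. }
     destruct (Rle_dec (eps * b / 2) (Xs n W (phi2 W Ab m) s)).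
     * assert (1 <= 2 / (eps * b) * Xs n W (phi2 W Ab m) s).
       { apply Rmult_le_reg_l with (eps * b / 2); auto. rewrite <- Rmult_assoc. replace (eps * b / 2 * (2 / (eps * b))) with 1 by (field; lra). lra. }
       lra.
     * assert (1 <= (Xs n W (phi_hi W m) s - INR n * avg W (phi_hi W m)) ^ 2 / (eps * b / 2) ^ 2).
       { apply sq_div_ge; auto. rewrite Rabs_right by lra. lra. }
       lra.
Qed.

Lemma avg_Fbad n W m Ab eps : 0 < eps -> 0 < INR n * ln (INR n) ->
  (1 <= Ab)%nat -> (Ab <= m)%nat -> (2 <= m)%nat -> (m <= 2^W)%nat ->
  let b := INR n * ln (INR n) in let t := eps * b / 2 in
  avg (n-1+W) (Fbad n W m Ab eps) <=
   INR n / 2^W + INR n * INR Ab / 2^W + 2 / (eps * b) * (INR n * (1 + ln (INR m) - ln (INR Ab)))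
   + 2 * (INR n * (2 * INR W) * (2^W / INR m) * avg W (phi_hi W m)) / t^2.
Proof. intros He Hb H1 H2 H3 H4 b t.
 assert (Hb0 : 0 < b) by (unfold b; lra).
 assert (Ht : 0 < t) by (unfold t; apply Rdiv_lt_0_compat; [apply Rmult_lt_0_compat|]; lra).
 assert (Ht2 : 0 < t^2) by (apply pow_lt; auto).
 unfold Fbad. fold b. fold t.
 rewrite (avg_ext _ _ (fun s => (Xs n W zer s + Xs n W (big Ab) s) + (2 / (eps * b)) * Xs n W (phi2 W Ab m) s
   + / t^2 * (Xs n W (phi_hi W m) s - INR n * avg W (phi_hi W m))^2
   + / t^2 * (Xs n W (phi_lo W m) s - INR n * avg W (phi_lo W m))^2)) by (intros; unfold Rdiv; ring).
 rewrite !avg_plus, !avg_scal, !Xs_avg by lia. rewrite mean_zero.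
 assert (Eb := mean_big W Ab ltac:(lia)).
 assert (E2 := mean_phi2 W Ab m ltac:(lia) ltac:(lia) ltac:(lia)).
 assert (V1 := var_bound n W (n-1+W) (phi_hi W m) (2^W / INR m) ltac:(lia) (fun w => phi_hi_bnd W m w ltac:(lia))).
 assert (V2 := var_bound n W (n-1+W) (phi_lo W m) (2^W / INR m) ltac:(lia) (fun w => phi_lo_bnd W m w ltac:(lia))).
 assert (Hlh : avg W (phi_lo W m) <= avg W (phi_hi W m)) by (apply avg_le; intros; apply lo_le_hi; lia).
 assert (Hn : 0 <= INR n) by apply pos_INR.
 assert (Hc : 0 <= 2^W / INR m) by (apply Rlt_le, Rdiv_lt_0_compat; [apply pow2R_pos| apply INRpos; lia]).
 assert (HW : 0 <= INR n * (2 * INR W) * (2^W / INR m)) by (apply Rmult_le_pos; [apply Rmult_le_pos; [auto| pose proof (pos_INR W); lra]| auto]).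
 assert (V2' : avg (n-1+W) (fun s => (Xs n W (phi_lo W m) s - INR n * avg W (phi_lo W m))^2)
    <= INR n * (2 * INR W) * (2^W / INR m) * avg W (phi_hi W m)) by nra.
 assert (Hit : 0 < / t^2) by (apply Rinv_0_lt_compat; auto).
 assert (Hk : 0 < 2 / (eps * b)) by (apply Rdiv_lt_0_compat; [lra| apply Rmult_lt_0_compat; auto]).
 unfold Rdiv at 1 2. unfold Rdiv in Eb.
 assert (Hp2 : 0 < / 2^W) by (apply Rinv_0_lt_compat, pow2R_pos).
 assert (INR n * avg W (big Ab) <= INR n * INR Ab * / 2^W) by (rewrite Rmult_assoc; apply Rmult_le_compat_l; auto).
 assert (2 / (eps * b) * (INR n * avg W (phi2 W Ab m)) <= 2 / (eps * b) * (INR n * (1 + ln (INR m) - ln (INR Ab)))).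
 { apply Rmult_le_compat_l; [lra|]. apply Rmult_le_compat_l; auto. }
 assert (/ t^2 * avg (n - 1 + W) (fun s => (Xs n W (phi_hi W m) s - INR n * avg W (phi_hi W m)) ^ 2)
   <= / t^2 * (INR n * (2 * INR W) * (2 ^ W / INR m) * avg W (phi_hi W m))) by (apply Rmult_le_compat_l; lra).
 assert (/ t^2 * avg (n - 1 + W) (fun s => (Xs n W (phi_lo W m) s - INR n * avg W (phi_lo W m)) ^ 2)
   <= / t^2 * (INR n * (2 * INR W) * (2 ^ W / INR m) * avg W (phi_hi W m))) by (apply Rmult_le_compat_l; lra).
 unfold Rdiv at 3. lra. Qed.

Lemma div_le a b c : 0 < c -> a <= b * c -> a / c <= b.
Proof. intros Hc H. apply Rmult_le_reg_r with c; auto. unfold Rdiv. rewrite Rmult_assoc, Rinv_l; lra. Qed.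

Lemma T4_bound eps p P2 R2 n L mu : 0 < eps -> 1 <= p -> 0 < P2 -> P2 <= n -> p / 2 <= L -> 0 <= mu -> mu <= L -> 0 < R2 ->
  2 * (n * (2 * (2 * p + 2)) * (P2 / R2) * mu) / (eps * (n * L) / 2)^2 <= 128 / (R2 * eps^2).
Proof. intros He Hp HP Hn HL Hm1 Hm2 HR.
 assert (Hn0 : 0 < n) by lra. assert (HL0 : 0 < L) by lra.
 apply div_le. apply pow_lt. apply Rdiv_lt_0_compat; [|lra]. apply Rmult_lt_0_compat; auto. apply Rmult_lt_0_compat; auto.
 replace (128 / (R2 * eps^2) * (eps * (n * L) / 2)^2) with (32 * n * n * L * L / R2) by (field; lra).
 replace (2 * (n * (2 * (2 * p + 2)) * (P2 / R2) * mu)) with (4 * n * (2*p+2) * P2 * mu / R2) by (field; lra).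
 unfold Rdiv. apply Rmult_le_compat_r. left; apply Rinv_0_lt_compat; auto.
 assert (A1 : (2*p+2) * P2 * mu <= (4 * p) * n * L).
 { apply Rmult_le_compat; [nra|lra| |lra]. apply Rmult_le_compat; lra. }
 assert (A2 : 4 * p * n * L <= 8 * n * L * L).
 { replace (4*p*n*L) with ((4*n*L)*p) by ring. replace (8*n*L*L) with ((4*n*L)*(2*L)) by ring. apply Rmult_le_compat_l. apply Rmult_le_pos; lra. lra. }
 nra. Qed.

Lemma T3_bound eps L k p delta : 0 < eps -> 0 < delta -> 0 <= k -> 1 <= p -> p / 2 <= L ->
  40 * (1 + k) / (eps * delta) <= p -> 2 * (1 + k) / (eps * L) <= delta / 10.
Proof. intros He Hd Hk Hp HL Hq. assert (HL0 : 0 < L) by lra.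
 apply div_le. apply Rmult_lt_0_compat; auto.
 assert (Hed : 0 < eps * delta) by (apply Rmult_lt_0_compat; auto).
 assert (H1 : 40 * (1 + k) <= p * (eps * delta)).
 { replace (40 * (1 + k)) with (40 * (1 + k) / (eps * delta) * (eps * delta)) by (field; lra).
   apply Rmult_le_compat_r; lra. }
 assert (p * eps * delta <= 2 * L * eps * delta).
 { apply Rmult_le_compat_r; [lra|]. apply Rmult_le_compat_r; lra. }
 nra. Qed.

Lemma nat_ge X : exists k, X <= INR k.
Proof. destruct (archimed X) as [H1 _]. destruct (Z_le_dec 0 (up X)).
 - exists (Z.to_nat (up X)). rewrite INR_IZR_INZ, Z2Nat.id by auto. lra.
 - exists 0%nat. assert (IZR (up X) <= -1). { apply IZR_le. lia. } simpl; lra. Qed.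

Lemma INR_le_pow2 k : INR k <= 2^k.
Proof. induction k. simpl; lra. rewrite S_INR. simpl. assert (1 <= 2^k) by (apply pow_R1_Rle; lra). lra. Qed.

Lemma ln_le x y : 0 < x -> x <= y -> ln x <= ln y.
Proof. intros H1 H2. destruct H2. left; apply ln_increasing; auto. subst; lra. Qed.

Lemma ln2_bounds : / 2 < ln 2 <= 1.
Proof. split. apply ln_lt_2. assert (H := ln_le_sub1 2 ltac:(lra)). lra. Qed.

Lemma ln_pow2 k : ln (2^k) = INR k * ln 2.
Proof. apply ln_pow; lra. Qed.

Lemma ln_INR_pow2 k : ln (INR (2^k)) = INR k * ln 2.
Proof. rewrite pow2_INR; apply ln_pow2. Qed.

Lemma core n p r q eps delta :
 0 < eps -> 0 < delta -> (4 <= r)%nat -> (r <= p)%nat -> (q <= p)%nat -> (1 <= p)%nat ->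
 (2^p <= n)%nat -> (n < 2^(S p))%nat ->
 1280/(eps^2*delta) <= 2^r -> 20/delta <= 2^q -> 10/delta <= INR p ->
 40*(1+(INR r + INR q))/(eps*delta) <= INR p -> 2*(INR r + 3)/eps <= INR p ->
 0 < INR n * ln (INR n) /\
 INR n * avg (2*p+2) (phi_hi (2*p+2) (2^(p+2+r))) <= INR n * ln (INR n) /\
 (1 - eps/2) * (INR n * ln (INR n)) <= INR n * avg (2*p+2) (phi_lo (2*p+2) (2^(p+2+r))) /\
 avg (n-1+(2*p+2)) (Fbad n (2*p+2) (2^(p+2+r)) (2^(p+2-q)) eps) <= 4*delta/10.
Proof. intros He Hd Hr4 Hrp Hqp Hp1 Hn1 Hn2 Hr Hq Hp10 Hp40 Hpe.
 set (W := (2*p+2)%nat). set (m := (2^(p+2+r))%nat). set (Ab := (2^(p+2-q))%nat).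
 assert (HAb1 : (1 <= Ab)%nat) by apply pow2_pos.
 assert (HAbm : (Ab <= m)%nat) by (apply Nat.pow_le_mono_r; lia).
 assert (Hm2 : (2 <= m)%nat). { unfold m. replace (p+2+r)%nat with (S (p+1+r)) by lia. rewrite Nat.pow_succ_r'. pose proof (pow2_pos (p+1+r)). lia. }
 assert (HmW : (m <= 2^W)%nat) by (apply Nat.pow_le_mono_r; lia).
 assert (Hl2 := ln2_bounds).
 assert (HP := pow2R_pos p).
 assert (Hn1R : 2^p <= INR n) by (rewrite <- pow2_INR; apply le_INR; auto).
 assert (Hn2R : INR n < 2 * 2^p) by (replace (2 * 2^p) with (2^(S p)) by (simpl; ring); rewrite <- pow2_INR; apply lt_INR; auto).
 assert (HpR : 1 <= INR p) by (apply (le_INR 1); auto).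
 assert (HL1 : INR p * ln 2 <= ln (INR n)) by (rewrite <- ln_pow2; apply ln_le; lra).
 assert (HL2 : ln (INR n) < (INR p + 1) * ln 2).
 { replace ((INR p + 1) * ln 2) with (INR (S p) * ln 2) by (rewrite S_INR; auto). rewrite <- ln_pow2. apply ln_increasing. lra. simpl. lra. }
 set (L := ln (INR n)) in *.
 assert (HL0 : 0 < L) by nra.
 assert (Hn0 : 0 < INR n) by lra.
 assert (Hb : 0 < INR n * L) by (apply Rmult_lt_0_compat; auto).
 assert (EW : INR W = 2 * INR p + 2) by (unfold W; rewrite plus_INR, mult_INR; simpl; ring).
 assert (Em : ln (INR m) = (INR p + 2 + INR r) * ln 2) by (unfold m; rewrite ln_INR_pow2, !plus_INR; simpl; ring).
 assert (EAb : ln (INR Ab) = (INR p + 2 - INR q) * ln 2) by (unfold Ab; rewrite ln_INR_pow2, minus_INR, !plus_INR by lia; simpl; ring).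
 assert (EPW : ln (2^W) = (2 * INR p + 2) * ln 2) by (rewrite ln_pow2, EW; auto).
 assert (HrR : 4 <= INR r) by (replace 4 with (INR 4) by (simpl; lra); apply le_INR; auto).
 assert (Mh := mean_hi W m ltac:(lia) HmW). rewrite EPW, Em in Mh.
 assert (Mh0 : 0 <= avg W (phi_hi W m)) by (apply avg_nonneg; intros; apply phi_hi_bnd; lia).
 assert (MhL : avg W (phi_hi W m) <= L) by nra.
 assert (Ml := mean_lo W m ltac:(lia) HmW). rewrite EPW, Em in Ml.
 assert (Ml0 : 0 <= avg W (phi_lo W m)) by (apply avg_nonneg; intros; apply phi_lo_bnd; lia).
 split; [auto|]. split. { apply Rmult_le_compat_l; lra. }
 split.
 { rewrite <- Rmult_assoc, (Rmult_comm _ (INR n)), Rmult_assoc. apply Rmult_le_compat_l; [lra|].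
   destruct (Rle_dec (1 - eps/2) 0). { nra. }
   assert (Hpe' : INR r + 3 <= eps / 2 * (INR p + 1)).
   { assert (2 * (INR r + 3) <= INR p * eps).
     { replace (2 * (INR r + 3)) with (2 * (INR r + 3) / eps * eps) by (field; lra). apply Rmult_le_compat_r; lra. }
     lra. }
   apply Rle_trans with ((1 - eps/2) * ((INR p + 1) * ln 2)). { apply Rmult_le_compat_l; lra. }
   nra. }
 assert (AF := avg_Fbad n W m Ab eps He Hb HAb1 HAbm Hm2 HmW). cbv zeta in AF. fold L in AF.
 eapply Rle_trans; [apply AF|].
 assert (E2W : 2^W = 4 * (2^p * 2^p)) by (unfold W; replace (2*p+2)%nat with (p+p+2)%nat by lia; rewrite !pow_add; simpl; ring).
 assert (EAbR : INR Ab * 2^q = 4 * 2^p) by (unfold Ab; rewrite pow2_INR, <- pow_add; replace (p+2-q+q)%nat with (p+2)%nat by lia; rewrite pow_add; simpl; ring).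
 assert (Hq0 := pow2R_pos q). assert (Hr0 := pow2R_pos r).
 assert (T1 : INR n / 2^W <= delta / 10).
 { rewrite E2W. apply div_le. nra.
   assert (10 / delta <= 2^p) by (pose proof (INR_le_pow2 p); lra).
   assert (10 <= 2^p * delta) by (replace 10 with (10 / delta * delta) by (field; lra); apply Rmult_le_compat_r; lra).
   nra. }
 assert (T2 : INR n * INR Ab / 2^W <= delta / 10).
 { rewrite E2W. apply div_le. nra.
   assert (20 <= 2^q * delta) by (replace 20 with (20 / delta * delta) by (field; lra); apply Rmult_le_compat_r; lra).
   assert (HA : INR Ab = 4 * 2^p / 2^q) by (apply (Rmult_eq_reg_r (2^q)); [rewrite EAbR; field|]; lra).
   rewrite HA. apply Rmult_le_reg_r with (2^q); auto. unfold Rdiv. field_simplify; try lra. nra. }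
 assert (T3 : 2 / (eps * (INR n * L)) * (INR n * (1 + ln (INR m) - ln (INR Ab))) <= delta / 10).
 { rewrite Em, EAb. replace (2 / (eps * (INR n * L)) * (INR n * (1 + (INR p + 2 + INR r) * ln 2 - (INR p + 2 - INR q) * ln 2)))
     with (2 * (1 + (INR r + INR q) * ln 2) / (eps * L)) by (field; lra).
   apply (T3_bound eps L _ (INR p) delta); auto. pose proof (pos_INR q); nra. nra.
   apply Rle_trans with (40 * (1 + (INR r + INR q)) / (eps * delta)); auto.
   unfold Rdiv. apply Rmult_le_compat_r. left; apply Rinv_0_lt_compat, Rmult_lt_0_compat; auto.
   pose proof (pos_INR q); nra. }
 assert (T4 : 2 * (INR n * (2 * INR W) * (2 ^ W / INR m) * avg W (phi_hi W m)) / (eps * (INR n * L) / 2) ^ 2 <= delta / 10).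
 { assert (Ec : 2^W / INR m = 2^p / 2^r).
   { unfold m. rewrite pow2_INR. rewrite E2W. replace (p+2+r)%nat with (p + (2 + r))%nat by lia. rewrite !pow_add. simpl. field. lra. }
   rewrite Ec, EW. eapply Rle_trans. apply (T4_bound eps (INR p) (2^p) (2^r) (INR n) L); auto; nra.
   apply div_le. apply Rmult_lt_0_compat; nra.
   assert (1280 <= 2^r * (eps^2 * delta)).
   { replace 1280 with (1280 / (eps^2 * delta) * (eps^2*delta)) by (field; lra). apply Rmult_le_compat_r; [|lra].
     apply Rmult_le_pos; nra. }
   nra. }
 lra. Qed.

Lemma cover_from_F (Mv : nat) (Fb : nat -> R) (Ev : R -> Prop) (delta : R) :
  0 < delta -> (forall s, 0 <= Fb s) -> avg Mv Fb <= delta / 2 ->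
  (forall x, Ev x -> 0 <= x < 1 /\ 1 <= Fb (dig Mv x)) ->
  outer_measure_le Ev delta.
Proof. intros Hd Hnn Hav Hcov.
 set (eta := delta / (2 * 2^Mv)).
 assert (HP := pow2R_pos Mv). assert (Heta : 0 < eta) by (unfold eta; apply Rdiv_lt_0_compat; lra).
 set (ind := fun i => if (i <? 2^Mv)%nat then (if Rle_dec 1 (Fb i) then true else false) else false).
 exists (fun i => if ind i then INR i / 2^Mv - eta else 0).
 exists (fun i => if ind i then (INR i + 1) / 2^Mv else 0).
 split; [|split].
 - intros i. destruct (ind i); [|lra]. assert (INR i / 2^Mv <= (INR i + 1) / 2^Mv).
   { unfold Rdiv. apply Rmult_le_compat_r. left; apply Rinv_0_lt_compat; auto. lra. } lra.
 - intros x Hx. destruct (Hcov x Hx) as [Hx01 HF]. exists (dig Mv x).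
   destruct (dig_spec Mv x Hx01) as [[H1 H2] H3].
   assert (Hi : ind (dig Mv x) = true).
   { unfold ind. destruct (Nat.ltb_spec (dig Mv x) (2^Mv)); [|lia]. destruct (Rle_dec 1 (Fb (dig Mv x))); auto; lra. }
   rewrite Hi. split.
   + assert (INR (dig Mv x) / 2^Mv <= x). { apply div_le; auto. lra. } lra.
   + apply Rmult_lt_reg_r with (2^Mv); auto. unfold Rdiv. rewrite Rmult_assoc, Rinv_l; lra.
 - intros N. rewrite sumR_f_R0.
   set (len := fun i => (if ind i then (INR i + 1) / 2^Mv else 0) - (if ind i then INR i / 2^Mv - eta else 0)).
   assert (Hlen : forall i, len i = if ind i then / 2^Mv + eta else 0).
   { intros i. unfold len. destruct (ind i); [field; lra| lra]. }
   assert (Hlen0 : forall i, 0 <= len i). { intros i. rewrite Hlen. destruct (ind i); [|lra].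
     assert (0 < / 2^Mv) by (apply Rinv_0_lt_compat; auto). lra. }
   fold len. eapply Rle_trans. apply (sumR_trunc _ (2^Mv)); auto.
   { intros i Hi. rewrite Hlen. unfold ind. destruct (Nat.ltb_spec i (2^Mv)); [lia|auto]. }
   apply Rle_trans with (sumR (2^Mv) (fun i => Fb i / 2^Mv + eta)).
   { apply sumR_le. intros i Hi. rewrite Hlen. unfold ind. destruct (Nat.ltb_spec i (2^Mv)); [|lia].
     destruct (Rle_dec 1 (Fb i)).
     - assert (/ 2^Mv <= Fb i / 2^Mv). { unfold Rdiv. rewrite <- (Rmult_1_l (/ 2^Mv)) at 1. apply Rmult_le_compat_r; [left; apply Rinv_0_lt_compat|]; auto. } lra.
     - assert (0 <= Fb i / 2^Mv) by (apply Rmult_le_pos; [auto| left; apply Rinv_0_lt_compat; auto]). lra. }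
   rewrite sumR_plus, sumR_const, pow2_INR. unfold avg in Hav. unfold Rdiv in Hav |- *.
   rewrite sumR_scalr. unfold eta. replace (2^Mv * (delta / (2 * 2^Mv))) with (delta / 2) by (field; lra). lra.
Qed.

Theorem theorem1p3 :
  forall eps delta : R, 0 < eps -> 0 < delta ->
  exists N : nat, forall n : nat, (N <= n)%nat ->
    outer_measure_le (deviation_event eps n) delta.
Proof.
 intros eps delta He Hd.
 destruct (nat_ge (1280/(eps^2*delta))) as [r0 Hr0].
 destruct (nat_ge (20/delta)) as [q Hq0].
 set (r := (r0 + 4)%nat).
 assert (Hr : 1280/(eps^2*delta) <= 2^r).
 { apply Rle_trans with (INR r0); auto. apply Rle_trans with (INR r). apply le_INR; unfold r; lia. apply INR_le_pow2. }
 assert (Hq : 20/delta <= 2^q) by (apply Rle_trans with (INR q); auto; apply INR_le_pow2).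
 destruct (nat_ge (10/delta + 40*(1+(INR r + INR q))/(eps*delta) + 2*(INR r + 3)/eps)) as [k Hk].
 assert (Hk1 : 0 <= 10/delta) by (apply Rlt_le, Rdiv_lt_0_compat; lra).
 assert (Hk2 : 0 <= 40*(1+(INR r + INR q))/(eps*delta)).
 { apply Rmult_le_pos. pose proof (pos_INR r); pose proof (pos_INR q); lra. left; apply Rinv_0_lt_compat, Rmult_lt_0_compat; auto. }
 assert (Hk3 : 0 <= 2*(INR r + 3)/eps).
 { apply Rmult_le_pos. pose proof (pos_INR r); lra. left; apply Rinv_0_lt_compat; auto. }
 set (P := (k + r + q + 1)%nat).
 exists (2^P)%nat. intros n Hn.
 set (p := Nat.log2 n).
 assert (Hn0 : (0 < n)%nat) by (pose proof (pow2_pos P); lia).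
 destruct (Nat.log2_spec n Hn0) as [Hs1 Hs2]. fold p in Hs1, Hs2.
 assert (HpP : (P <= p)%nat). { unfold p. rewrite <- (Nat.log2_pow2 P) by lia. apply Nat.log2_le_mono; auto. }
 assert (HkR : INR k <= INR p) by (apply le_INR; unfold P in HpP; lia).
 destruct (core n p r q eps delta He Hd ltac:(unfold r; lia) ltac:(unfold P in HpP; lia) ltac:(unfold P in HpP; lia)
    ltac:(unfold P in HpP; lia) Hs1 Hs2 Hr Hq ltac:(lra) ltac:(lra) ltac:(lra)) as [Hb [Hh [Hl Hav]]].
 apply (cover_from_F (n-1+(2*p+2)) (Fbad n (2*p+2) (2^(p+2+r)) (2^(p+2-q)) eps)).
 - auto.
 - intros s. apply Fbad_nonneg; auto.
 - lra.
 - intros x Hx. split. destruct Hx as [Hx _]; auto.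
   apply pointwise; auto.
   + apply pow2_pos.
   + apply Nat.pow_le_mono_r; lia.
   + replace (p+2+r)%nat with (S (p+1+r)) by lia. rewrite Nat.pow_succ_r'. pose proof (pow2_pos (p+1+r)). lia.
Qed.
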